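(* Let $G$ be a (finite or infinite) group with identity $\mathbf{1}$. If $G$ is not a hamiltonian $2$-group, then the complete graph $\mathrm{Cay}(G; G\setminus\{\mathbf{1}\})$ is strongly CCA.
   Context: A hamiltonian $2$-group is a group isomorphic to $Q_8\times B$, where $Q_8$ is the quaternion group of order $8$ and $B$ is an abelian group with $b^2=\mathbf{1}$ for all $b\in B$. For an inverse-closed subset $S$ of $G$, $\mathrm{Cay}(G;S)$ has vertex set $G$ and an edge from $g$ to $gs$ for each $g\in G$, $s\in S$; the edge $g$—$gs$ is coloured $\{s,s^{-1}\}$. A graph automorphism is colour-permuting if whenever two edges have the same colour their images also have the same colour. A map $\varphi\colon G\to G$ is affine if $\varphi(x)=\alpha(gx)$ for some $\alpha\in\mathrm{Aut}(G)$, $g\in G$. The Cayley graph is strongly CCA if every colour-permuting automorphism of it is affine. *)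

(* Defs.v *)
Set Implicit Arguments.

Record Grp := {
  carrier :> Type;
  gmul : carrier -> carrier -> carrier;
  ginv : carrier -> carrier;
  gone : carrier;
  gmulA : forall x y z, gmul x (gmul y z) = gmul (gmul x y) z;
  gmul1 : forall x, gmul gone x = x;
  gmulV : forall x, gmul (ginv x) x = gone
}.

Arguments gmul {g}.
Arguments ginv {g}.
Arguments gone {g}.

Definition bijective {A B : Type} (f : A -> B) : Prop :=
  exists g : B -> A, (forall x, g (f x) = x) /\ (forall y, f (g y) = y).

Inductive QU := Q1 | Qi | Qj | Qk.

(* product of units: (negative sign?, unit) *)
Definition qumul (a b : QU) : bool * QU :=
  match a, b with
  | Q1, x => (false, x)
  | x, Q1 => (false, x)
  | Qi, Qi => (true, Q1) | Qj, Qj => (true, Q1) | Qk, Qk => (true, Q1)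
  | Qi, Qj => (false, Qk) | Qj, Qi => (true, Qk)
  | Qj, Qk => (false, Qi) | Qk, Qj => (true, Qi)
  | Qk, Qi => (false, Qj) | Qi, Qk => (true, Qj)
  end.

Definition Q8 := (bool * QU)%type.

Definition q8mul (x y : Q8) : Q8 :=
  let (s, c) := qumul (snd x) (snd y) in (xorb (xorb (fst x) (fst y)) s, c).

Lemma q8mulA (x y z : Q8) : q8mul x (q8mul y z) = q8mul (q8mul x y) z.
Proof.
  destruct x as [[|] [| | |]], y as [[|] [| | |]], z as [[|] [| | |]];
  reflexivity.
Qed.

Definition hamiltonian2 (G : Grp) : Prop :=
  exists B : Grp,
    (forall a b : B, gmul a b = gmul b a) /\
    (forall b : B, gmul b b = gone) /\
    exists f : G -> (Q8 * B)%type,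
      bijective f /\
      forall x y : G,
        f (gmul x y) = (q8mul (fst (f x)) (fst (f y)), gmul (snd (f x)) (snd (f y))).

(* Cay(G;S): edge between g and g s for s in S; i.e. u ~ v iff u^-1 v in S. *)
Definition cay_adj {G : Grp} (S : G -> Prop) (u v : G) : Prop :=
  S (gmul (ginv u) v).

(* colour of the edge {u, v} (with v = u s) is the set {s, s^-1}
   = {u^-1 v, v^-1 u} *)
Definition edge_colour {G : Grp} (u v : G) : G -> Prop :=
  fun x => x = gmul (ginv u) v \/ x = gmul (ginv v) u.

Definition same_colour {G : Grp} (u v u' v' : G) : Prop :=
  forall x, edge_colour u v x <-> edge_colour u' v' x.

Definition graph_aut {G : Grp} (S : G -> Prop) (phi : G -> G) : Prop :=
  bijective phi /\ forall u v, cay_adj S u v <-> cay_adj S (phi u) (phi v).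

Definition colour_permuting {G : Grp} (S : G -> Prop) (phi : G -> G) : Prop :=
  graph_aut S phi /\
  forall u v u' v', cay_adj S u v -> cay_adj S u' v' ->
    same_colour u v u' v' -> same_colour (phi u) (phi v) (phi u') (phi v').

Definition group_aut {G : Grp} (alpha : G -> G) : Prop :=
  bijective alpha /\ forall x y, alpha (gmul x y) = gmul (alpha x) (alpha y).

Definition affine {G : Grp} (phi : G -> G) : Prop :=
  exists alpha g, group_aut alpha /\ forall x, phi x = alpha (gmul g x).

Definition strongly_CCA {G : Grp} (S : G -> Prop) : Prop :=
  forall phi, colour_permuting S phi -> affine phi.

(* Main.v *)
Require Import Defs.
From Stdlib Require Import Classical ClassicalEpsilon.
From mathcomp Require boolp classical_sets.

Notation "x ⋅ y" := (gmul x y) (at level 40, left associativity).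
Notation "x ⁻" := (ginv x) (at level 30).
Notation "'𝟙'" := (gone).

Section GB.
Context {G : Grp}.
Implicit Types x y z : G.

Lemma mulA x y z : x ⋅ (y ⋅ z) = x ⋅ y ⋅ z. Proof. apply gmulA. Qed.
Lemma mul1 x : 𝟙 ⋅ x = x. Proof. apply gmul1. Qed.
Lemma mulVx x : x⁻ ⋅ x = 𝟙. Proof. apply gmulV. Qed.
Lemma mulVK x y : x⁻ ⋅ (x ⋅ y) = y.
Proof. rewrite mulA, mulVx, mul1. reflexivity. Qed.
Lemma mulxV x : x ⋅ x⁻ = 𝟙.
Proof.
  rewrite <- (mul1 (x ⋅ x⁻)). rewrite <- (mulVx (x⁻)) at 1.
  rewrite <- mulA. rewrite (mulA (x⁻)). rewrite mulVx, mul1. apply mulVx.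
Qed.
Lemma mulx1 x : x ⋅ 𝟙 = x.
Proof. rewrite <- (mulVx x), mulA, mulxV, mul1. reflexivity. Qed.
Lemma invK x : (x⁻)⁻ = x.
Proof. rewrite <- (mulx1 ((x⁻)⁻)), <- (mulVx x), mulA, mulVx, mul1. reflexivity. Qed.
Lemma mulKV x y : x ⋅ (x⁻ ⋅ y) = y.
Proof. rewrite mulA, mulxV, mul1. reflexivity. Qed.
Lemma mulI x y z : x ⋅ y = x ⋅ z -> y = z.
Proof. intro H. rewrite <- (mulVK x y), H, mulVK. reflexivity. Qed.
Lemma mulIr x y z : y ⋅ x = z ⋅ x -> y = z.
Proof. intro H. rewrite <- (mulx1 y), <- (mulxV x), mulA, H, <- mulA, mulxV, mulx1. reflexivity. Qed.
Lemma inv_uniq x y : x ⋅ y = 𝟙 -> y = x⁻.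
Proof. intro H. apply (mulI x). rewrite H, mulxV. reflexivity. Qed.
Lemma invM x y : (x ⋅ y)⁻ = y⁻ ⋅ x⁻.
Proof. symmetry. apply inv_uniq. rewrite <- !mulA, mulKV, mulxV. reflexivity. Qed.
Lemma inv1 : (𝟙 : G)⁻ = 𝟙.
Proof. symmetry. apply inv_uniq. apply mul1. Qed.
Lemma inv_inj x y : x⁻ = y⁻ -> x = y.
Proof. intro H. rewrite <- (invK x), H, invK. reflexivity. Qed.
Lemma invKr x y : x ⋅ y ⋅ y⁻ = x.
Proof. rewrite <- mulA, mulxV, mulx1. reflexivity. Qed.
Lemma invKr' x y : x ⋅ y⁻ ⋅ y = x.
Proof. rewrite <- mulA, mulVx, mulx1. reflexivity. Qed.
End GB.

Ltac gnorm :=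
  repeat (first
   [ rewrite invM | rewrite invK | rewrite inv1
   | rewrite <- mulA | rewrite mul1 | rewrite mulx1 | rewrite mulVx | rewrite mulxV
   | rewrite mulVK | rewrite mulKV ]).
Ltac gnormin H :=
  repeat (first
   [ rewrite invM in H | rewrite invK in H | rewrite inv1 in H
   | rewrite <- mulA in H | rewrite mul1 in H | rewrite mulx1 in H | rewrite mulVx in H | rewrite mulxV in H
   | rewrite mulVK in H | rewrite mulKV in H ]).

Lemma lmul {G : Grp} (c x y : G) : x = y -> c ⋅ x = c ⋅ y. Proof. intros ->; reflexivity. Qed.
Lemma rmul {G : Grp} (c x y : G) : x = y -> x ⋅ c = y ⋅ c. Proof. intros ->; reflexivity. Qed.
Ltac lm c H := apply (lmul c) in H; gnormin H.
Ltac rm c H := apply (rmul c) in H; gnormin H.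


Lemma zorn_sub (T : Type) (P : (T -> Prop) -> Prop) :
  (forall F : (T -> Prop) -> Prop, (forall X, F X -> P X) ->
     (forall X Y, F X -> F Y -> (forall t, X t -> Y t) \/ (forall t, Y t -> X t)) ->
     P (fun t => exists X, F X /\ X t)) ->
  exists A, P A /\ forall B, (forall t, A t -> B t) -> ~ (forall t, B t -> A t) -> ~ P B.
Proof.
  intro H.
  destruct (@classical_sets.Zorn_bigcup T P) as [A [PA HA]].
  - intros F HF Htot.
    assert (E : classical_sets.bigcup F (fun X => X) = (fun t => exists X, F X /\ X t)).
    { apply boolp.funext. intro t. apply boolp.propext. split.
      - intros [X FX Xt]. exists X. split; assumption.
      - intros [X [FX Xt]]. exists X; assumption. }
    rewrite E. apply H.
    + exact HF.
    + intros X Y FX FY. destruct (Htot X Y FX FY); [left|right]; assumption.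
  - exists A. split; [exact PA|]. intros B HAB HBA PB. apply (HA B); [split; assumption | exact PB].
Qed.

Lemma eq1_inv {G : Grp} (x y : G) : x ⋅ y = 𝟙 -> x = y⁻.
Proof. intro H. rm (y⁻) H. exact H. Qed.
Lemma eq1_inv' {G : Grp} (x y : G) : x ⋅ y = 𝟙 -> y = x⁻.
Proof. intro H. lm (x⁻) H. exact H. Qed.
Lemma inv_eq_self {G : Grp} (x : G) : x ⋅ x = 𝟙 -> x⁻ = x.
Proof. intro H. symmetry. apply eq1_inv. exact H. Qed.

Lemma inv_self_sq {G : Grp} (x : G) : x⁻ = x -> x ⋅ x = 𝟙.
Proof. intro H. rewrite <- H at 2. apply mulxV. Qed.

Lemma conjM {G : Grp} (p q x : G) : (p ⋅ q)⁻ ⋅ x ⋅ (p ⋅ q) = q⁻ ⋅ (p⁻ ⋅ x ⋅ p) ⋅ q.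
Proof. gnorm. reflexivity. Qed.
Lemma conjV {G : Grp} (c x : G) : c⁻ ⋅ x⁻ ⋅ c = (c⁻ ⋅ x ⋅ c)⁻.
Proof. gnorm. reflexivity. Qed.
Lemma conj_back {G : Grp} (c x y : G) : c⁻ ⋅ x ⋅ c = y -> c ⋅ y ⋅ c⁻ = x.
Proof. intro H. rewrite <- H. gnorm. reflexivity. Qed.
Lemma conj_inv {G : Grp} (c x : G) : (c⁻)⁻ ⋅ x ⋅ c⁻ = c ⋅ x ⋅ c⁻.
Proof. rewrite invK. reflexivity. Qed.

Section PHsec.
Variable G : Grp.
Definition PH (f : G -> G) := forall x y : G, f (x ⋅ y) = f x ⋅ f y \/ f (x ⋅ y) = f x ⋅ (f y)⁻.
Record PHmap (f : G -> G) : Prop := {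
  ph_inj : forall x y, f x = f y -> x = y;
  ph_surj : forall y, exists x, f x = y;
  ph_one : f 𝟙 = 𝟙;
  ph_ph : PH f }.

Variable f : G -> G.
Hypothesis Hf : PHmap f.

Lemma ph_invw (x : G) : f (x⁻) = (f x)⁻ \/ f (x⁻) = f x.
Proof.
  destruct (ph_ph _ Hf x (x⁻)) as [H|H]; rewrite mulxV, (ph_one _ Hf) in H.
  - left. symmetry in H. apply eq1_inv' in H. exact H.
  - right. symmetry in H. apply eq1_inv' in H. apply inv_inj. rewrite H. reflexivity.
Qed.

Lemma ph_sq (x : G) : x ⋅ x <> 𝟙 -> f (x ⋅ x) = f x ⋅ f x.
Proof.
  intro Hx. destruct (ph_ph _ Hf x x) as [H|H]; auto.
  rewrite mulxV, <- (ph_one _ Hf) in H. apply (ph_inj _ Hf) in H. contradiction.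
Qed.

Lemma ph_inv1 (x : G) : x ⋅ x = 𝟙 -> f x ⋅ f x = 𝟙.
Proof.
  intros Hxx. set (a := f x). apply NNPP. intro Haa.
  assert (F1g : forall c, c ⋅ c = a ⋅ a \/ a ⋅ c ⋅ a⁻ = c⁻ \/ a ⋅ c = c ⋅ a).
  { intro c. destruct (ph_surj _ Hf c) as [k Hk].
    assert (Hxk : x ⋅ (x ⋅ k) = k) by (rewrite mulA, Hxx, mul1; reflexivity).
    destruct (ph_ph _ Hf x k) as [H1|H1]; destruct (ph_ph _ Hf x (x ⋅ k)) as [H2|H2];
      rewrite H1, Hxk, Hk in H2; fold a in H2; rewrite Hk in H1.
    - exfalso. apply Haa. rm (c⁻) H2. symmetry in H2. exact H2.
    - right; left. gnormin H2. rewrite H2 at 2. gnorm. reflexivity.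
    - left. rm c H2. rewrite H2. gnorm. reflexivity.
    - right; right. gnormin H2. rewrite H2 at 2. gnorm. reflexivity. }
  assert (F1 : forall c, c ⋅ c = 𝟙 -> a ⋅ c = c ⋅ a).
  { intros c Hc. destruct (F1g c) as [H|[H|H]]; auto.
    - rewrite Hc in H. symmetry in H. contradiction.
    - rewrite (inv_eq_self c Hc) in H. rm a H. exact H. }
  assert (F2 : forall y, y ⋅ x = x ⋅ y -> y ⋅ y <> 𝟙 -> (f y)⁻ ⋅ a ⋅ f y = a⁻).
  { intros y Hyx Hyy. set (c := f y).
    assert (E : (y ⋅ x) ⋅ (y ⋅ x) = y ⋅ y).
    { rewrite <- mulA, (mulA x), <- Hyx, <- mulA, Hxx, mulx1. reflexivity. }
    assert (Hs1 := ph_sq y Hyy).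
    assert (Hs2 := ph_sq (y ⋅ x) ltac:(rewrite E; exact Hyy)).
    rewrite E, Hs1 in Hs2. fold c in Hs2.
    destruct (ph_ph _ Hf y x) as [H|H]; rewrite H in Hs2; fold c a in Hs2.
    - lm (c⁻) Hs2. apply eq1_inv. gnorm. rewrite <- Hs2. gnorm. reflexivity.
    - lm (c⁻) Hs2. lm a Hs2. rm a Hs2. apply eq1_inv. gnorm. rewrite Hs2. gnorm. reflexivity. }
  assert (Hax : a ⋅ x = x ⋅ a) by (apply F1; exact Hxx).
  assert (Hinj := ph_inj _ Hf). assert (H1 := ph_one _ Hf).
  set (al := f a).
  assert (Hal : al⁻ ⋅ a ⋅ al = a⁻) by (apply F2; [exact Hax | exact Haa]).
  assert (Hnc : a ⋅ al <> al ⋅ a).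
  { intro E. apply Haa. gnormin Hal. rewrite E in Hal. gnormin Hal. rewrite Hal at 2. apply mulxV. }
  assert (Hal2 : a ⋅ al ⋅ a⁻ = al⁻).
  { destruct (F1g al) as [E|[E|E]]; [ | exact E | contradiction].
    assert (E2 : a ⋅ al = al ⋅ a⁻) by (lm al Hal; exact Hal).
    rewrite E2. gnorm. apply eq1_inv. gnorm. rewrite (mulA (a⁻) (a⁻)), <- invM, <- E. gnorm. reflexivity. }
  destruct (ph_surj _ Hf x) as [k0 Hk0].
  assert (Hk0k0 : k0 ⋅ k0 = 𝟙).
  { apply Hinj. rewrite H1. destruct (ph_ph _ Hf k0 k0) as [E|E]; rewrite E, Hk0.
    - exact Hxx.
    - apply mulxV. }
  assert (Hak0 : a ⋅ k0 = k0 ⋅ a) by (apply F1; exact Hk0k0).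
  assert (Hxi : x⁻ = x) by (apply inv_eq_self; exact Hxx).
  assert (Halx : al ⋅ x = x ⋅ al \/ al ⋅ x = x ⋅ al⁻).
  { assert (E1 : f (a ⋅ k0) = al ⋅ x).
    { destruct (ph_ph _ Hf a k0) as [E|E]; rewrite E, Hk0; fold al; [reflexivity| rewrite Hxi; reflexivity]. }
    destruct (ph_ph _ Hf k0 a) as [E|E]; rewrite Hk0 in E; fold al in E; rewrite <- Hak0, E1 in E;
      [left|right]; exact E. }
  destruct Halx as [Halx|Halx].
  -
    assert (Halal : al ⋅ al <> 𝟙).
    { intro E. apply Haa. apply Hinj. rewrite H1, ph_sq by exact Haa. exact E. }
    set (be := f al).
    assert (Hbe : be⁻ ⋅ a ⋅ be = a⁻) by (apply F2; [exact Halx | exact Halal]).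
    assert (Haal : (a ⋅ al) ⋅ x = x ⋅ (a ⋅ al)).
    { rewrite <- mulA, Halx, mulA, Hax, <- mulA. reflexivity. }
    assert (Haal2 : (a ⋅ al) ⋅ (a ⋅ al) <> 𝟙).
    { intro E. apply Haa. assert (E2 : a ⋅ al = al⁻ ⋅ a) by (rm a Hal2; exact Hal2).
      assert (E3 : al⁻ ⋅ (a ⋅ (a ⋅ al)) = 𝟙).
      { transitivity ((al⁻ ⋅ a) ⋅ (a ⋅ al)). gnorm; reflexivity. rewrite <- E2. exact E. }
      lm al E3. rm (al⁻) E3. exact E3. }
    set (ga := f (a ⋅ al)).
    assert (Hga : ga⁻ ⋅ a ⋅ ga = a⁻) by (apply F2; [exact Haal | exact Haal2]).
    apply Haa. apply inv_self_sq. rewrite <- Hga. subst ga.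
    destruct (ph_ph _ Hf a al) as [E|E]; rewrite E; fold al be; rewrite conjM, Hal.
    + rewrite conjV, Hbe, invK. reflexivity.
    + assert (Hb2 : be ⋅ a ⋅ be⁻ = a⁻).
      { assert (Hb0 : be⁻ ⋅ a⁻ ⋅ be = a) by (rewrite conjV, Hbe, invK; reflexivity).
        apply (conj_back _ _ _ Hb0). }
      rewrite conjV, conj_inv, Hb2, invK. reflexivity.
  -
    assert (Hxal : x ⋅ al = al⁻ ⋅ x).
    { transitivity (x ⋅ (al ⋅ x) ⋅ x).
      - gnorm. rewrite Hxx, mulx1. reflexivity.
      - rewrite Halx. gnorm. rewrite mulA, Hxx, mul1. reflexivity. }
    assert (Hax' : a⁻ ⋅ x = x ⋅ a⁻).
    { lm (a⁻) Hax. rm (a⁻) Hax. symmetry. exact Hax. }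
    assert (Hi : (x ⋅ a⁻ ⋅ al) ⋅ (x ⋅ a⁻ ⋅ al) = 𝟙).
    { transitivity (x ⋅ a⁻ ⋅ (al ⋅ x) ⋅ a⁻ ⋅ al). gnorm; reflexivity.
      rewrite Halx.
      transitivity (x ⋅ (a⁻ ⋅ x) ⋅ (al⁻ ⋅ a⁻ ⋅ al)). gnorm; reflexivity.
      rewrite Hax', conjV, Hal, invK. gnorm. exact Hxx. }
    apply F1 in Hi. apply Hnc.
    assert (E : al = a⁻ ⋅ al ⋅ a).
    { apply (mulI x). transitivity (a ⋅ (x ⋅ a⁻ ⋅ al)).
      - rewrite <- (mulA x), (mulA a x), Hax. gnorm. reflexivity.
      - rewrite Hi. gnorm. reflexivity. }
    rewrite E at 1. gnorm. reflexivity.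
Qed.

Lemma ph_inv (x : G) : f (x⁻) = (f x)⁻.
Proof.
  destruct (classic (x⁻ = x)) as [E|E].
  - assert (Hx := inv_self_sq x E). assert (Hfx := ph_inv1 x Hx).
    rewrite E. symmetry. apply inv_eq_self. exact Hfx.
  - destruct (ph_invw x) as [H|H]; auto. apply (ph_inj _ Hf) in H. contradiction.
Qed.

Definition good (x y : G) := f (x ⋅ y) = f x ⋅ f y.

Lemma ph_bad x y : ~ good x y -> f (x ⋅ y) = f x ⋅ (f y)⁻.
Proof. intro H. destruct (ph_ph _ Hf x y); tauto. Qed.

Lemma bad_nsq x y : ~ good x y -> f y ⋅ f y <> 𝟙.
Proof.
  intros H E. apply H. unfold good. rewrite (ph_bad _ _ H), (inv_eq_self _ E). reflexivity.
Qed.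

Lemma bad_img x y : ~ good x y ->
  f x ⋅ f y ⋅ f x = f y /\ f x ⋅ f x = f y ⋅ f y.
Proof.
  intro Hbad. assert (Hb := ph_bad _ _ Hbad). assert (Hbb := bad_nsq _ _ Hbad).
  set (a := f x) in *. set (b := f y) in *.
  split.
  - destruct (ph_ph _ Hf (x⁻) (x ⋅ y)) as [E|E]; rewrite mulVK, Hb, ph_inv in E; fold a b in E.
    + gnormin E. exfalso. apply Hbb. rewrite E at 2. apply mulxV.
    + gnormin E. lm a E. rm a E. gnorm. exact E.
  - assert (Hi : f ((x ⋅ y)⁻) = b ⋅ a⁻) by (rewrite ph_inv, Hb; gnorm; reflexivity).
    rewrite invM in Hi.
    destruct (ph_ph _ Hf (y⁻) (x⁻)) as [E|E]; rewrite Hi, !ph_inv in E; fold a b in E.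
    + rm a E. exfalso. apply Hbb. rewrite E at 2. apply mulxV.
    + gnormin E. lm b E. rm a E. symmetry. exact E.
Qed.

Lemma bad_flip x y : ~ good x y -> f (x ⋅ y) = f y ⋅ f x.
Proof.
  intro Hbad. destruct (bad_img _ _ Hbad) as [E1 E2]. rewrite (ph_bad _ _ Hbad).
  set (a := f x) in *. set (b := f y) in *.
  transitivity (a⁻ ⋅ b).
  - apply (mulI a). gnorm. rewrite mulA, E2. gnorm. reflexivity.
  - lm (a⁻) E1. rewrite E1. reflexivity.
Qed.

Lemma bad_nc_img x y : ~ good x y -> f x ⋅ f y <> f y ⋅ f x.
Proof. intros H E. apply H. unfold good. rewrite (bad_flip _ _ H). symmetry; exact E. Qed.

Definition finv (y : G) : G := proj1_sig (constructive_indefinite_description _ (ph_surj _ Hf y)).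
Lemma f_finv y : f (finv y) = y.
Proof. unfold finv. destruct (constructive_indefinite_description _ _). simpl. exact e. Qed.
Lemma finv_f x : finv (f x) = x.
Proof. apply (ph_inj _ Hf). apply f_finv. Qed.

Lemma finv_PH : PHmap finv.
Proof.
  constructor.
  - intros u v E. rewrite <- (f_finv u), <- (f_finv v), E. reflexivity.
  - intro y. exists (f y). apply finv_f.
  - rewrite <- (ph_one _ Hf) at 1. apply finv_f.
  - intros A B. set (x := finv A). set (w := finv (A ⋅ B)). set (y := x⁻ ⋅ w).
    assert (Hw : w = x ⋅ y) by (unfold y; gnorm; reflexivity).
    assert (HA : f x = A) by apply f_finv. assert (HAB : f w = A ⋅ B) by apply f_finv.
    fold w. rewrite Hw.
    destruct (ph_ph _ Hf x y) as [E|E]; rewrite <- Hw, HAB, HA in E; apply mulI in E.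
    + left. rewrite E, finv_f. reflexivity.
    + right. assert (E' : f (y⁻) = B) by (rewrite ph_inv, <- E; gnorm; reflexivity).
      rewrite <- E', finv_f, invK. reflexivity.
Qed.
End PHsec.

Arguments good {G} f x y.
Arguments finv {G} f Hf y.

Section PH2.
Context {G : Grp}.
Variable f : G -> G.
Hypothesis Hf : PHmap G f.

Lemma bad_dom x y : ~ good f x y -> x ⋅ y ⋅ x = y /\ x ⋅ x = y ⋅ y.
Proof.
  intro Hb. set (h := finv f Hf). assert (Hh : PHmap G h) by apply finv_PH.
  assert (Hb' : ~ good h (f x) (f y)).
  { intro E. apply Hb. unfold good in E |- *. unfold h in E. rewrite !finv_f in E.
    rewrite <- E, f_finv. reflexivity. }
  destruct (bad_img G h Hh _ _ Hb') as [E1 E2]. unfold h in E1, E2. rewrite !finv_f in E1, E2.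
  split; assumption.
Qed.

Lemma good_comm x y : x ⋅ y = y ⋅ x -> good f x y.
Proof.
  intro C. apply NNPP. intro Hb. destruct (bad_dom _ _ Hb) as [E1 E2].
  rewrite C in E1. rewrite <- mulA in E1.
  assert (Hxx : x ⋅ x = 𝟙).
  { lm (y⁻) E1. exact E1. }
  apply (bad_nsq G f Hf _ _ Hb). apply ph_inv1; auto. rewrite <- E2. exact Hxx.
Qed.

Lemma bad_nc x y : ~ good f x y -> x ⋅ y <> y ⋅ x.
Proof. intros Hb C. apply Hb. apply good_comm. exact C. Qed.

Lemma bad_sym x y : ~ good f x y -> ~ good f y x.
Proof.
  intros Hb Hg. apply (bad_nc _ _ Hb). apply (ph_inj _ _ Hf).
  rewrite (bad_flip G f Hf _ _ Hb). symmetry. exact Hg.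
Qed.

Lemma good_sym x y : x ⋅ y <> y ⋅ x -> good f x y -> good f y x.
Proof.
  intros C Hg. apply NNPP. intro Hb. apply bad_sym in Hb. contradiction.
Qed.

Lemma sq_inv1 x : x ⋅ x = 𝟙 -> f x ⋅ f x = 𝟙.
Proof. apply ph_inv1. exact Hf. Qed.

Lemma bad_nsq_dom x y : ~ good f x y -> y ⋅ y <> 𝟙.
Proof. intros Hb E. apply (bad_nsq G f Hf _ _ Hb). apply sq_inv1. exact E. Qed.

Lemma bad_invr x y : ~ good f x y -> ~ good f x (y⁻).
Proof.
  intros Hb Hg. apply (bad_nsq_dom _ _ Hb). apply inv_self_sq.
  apply mulI with x. apply (ph_inj _ _ Hf). unfold good in Hg. rewrite Hg, (ph_bad G f Hf _ _ Hb).
  rewrite (ph_inv G f Hf). reflexivity.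
Qed.

Lemma bad_invl x y : ~ good f x y -> ~ good f (x⁻) y.
Proof. intro Hb. apply bad_sym, bad_invr, bad_sym. exact Hb. Qed.

Lemma bad_mul x y : ~ good f x y -> ~ good f x (x ⋅ y).
Proof.
  intro Hb. rewrite <- (invK x) at 1. apply bad_invl.
  intro Hg. unfold good in Hg. rewrite mulVK, (bad_flip G f Hf _ _ Hb), (ph_inv G f Hf) in Hg.
  apply (bad_nc_img G f Hf _ _ Hb). lm (f x) Hg. rewrite Hg at 1. gnorm. reflexivity.
Qed.

Lemma good_mul x g : good f x g -> good f (x⁻) (x ⋅ g).
Proof.
  intro Hg. unfold good in *. rewrite mulVK, Hg, (ph_inv G f Hf). gnorm. reflexivity.
Qed.

Lemma good_mul' x g : good f x g -> good f x (x ⋅ g).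
Proof.
  intro Hg. apply NNPP. intro Hb. apply bad_invl in Hb. apply Hb. apply good_mul. exact Hg.
Qed.

End PH2.

Section Quat.
Context {G : Grp}.
Variables x y : G.
Hypothesis Q1 : x ⋅ y ⋅ x = y.
Hypothesis Q2 : x ⋅ x = y ⋅ y.

Lemma q_xy : x ⋅ y = y ⋅ x⁻.
Proof. rewrite <- Q1 at 2. gnorm. reflexivity. Qed.
Lemma q_conjy : y⁻ ⋅ x ⋅ y = x⁻.
Proof. rewrite <- (mulA (y⁻)), q_xy. gnorm. reflexivity. Qed.
Lemma q_conjx : x ⋅ y ⋅ x⁻ = y⁻.
Proof.
  rewrite q_xy. apply (mulI y). gnorm. rewrite mulA, <- Q2. gnorm. reflexivity.
Qed.
Lemma q_yxy : y ⋅ x ⋅ y = x.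
Proof.
  transitivity (y ⋅ (y ⋅ x⁻)). rewrite <- q_xy. gnorm; reflexivity.
  rewrite mulA, <- Q2. gnorm. reflexivity.
Qed.
Lemma q_e4 : x ⋅ x ⋅ (x ⋅ x) = 𝟙.
Proof.
  assert (E := q_conjy). 
  assert (E2 : y⁻ ⋅ (x ⋅ x) ⋅ y = x⁻ ⋅ x⁻).
  { rewrite <- E. gnorm. reflexivity. }
  rewrite Q2 in E2 at 1. gnormin E2. rewrite <- Q2 in E2.
  rewrite E2 at 1. gnorm. reflexivity.
Qed.
End Quat.


Lemma comp_PH {G : Grp} (g h : G -> G) : PHmap G g -> PHmap G h -> PHmap G (fun t => g (h t)).
Proof.
  intros Hg Hh. constructor.
  - intros s t E. apply (ph_inj _ _ Hh). apply (ph_inj _ _ Hg). exact E.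
  - intro c. destruct (ph_surj _ _ Hg c) as [u Hu]. destruct (ph_surj _ _ Hh u) as [v Hv].
    exists v. rewrite Hv. exact Hu.
  - rewrite (ph_one _ _ Hh). apply (ph_one _ _ Hg).
  - intros s t. destruct (ph_ph _ _ Hh s t) as [E|E]; rewrite E.
    + apply (ph_ph _ _ Hg).
    + destruct (ph_ph _ _ Hg (h s) ((h t)⁻)) as [E2|E2]; rewrite E2, (ph_inv _ _ Hg).
      * right. reflexivity.
      * left. rewrite invK. reflexivity.
Qed.

Section LXsec.
Context {G : Grp}.
Variable f : G -> G.
Hypothesis Hf : PHmap G f.
Variable x : G.

Definition chi (t : G) := (f x)⁻ ⋅ f (x ⋅ t).

Lemma chi_PH : PHmap G chi.
Proof.
  unfold chi. constructor.
  - intros s t E. apply mulI in E. apply (ph_inj _ _ Hf) in E. apply mulI in E. exact E.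
  - intro c. exists (x⁻ ⋅ finv f Hf (f x ⋅ c)). rewrite mulKV, f_finv. gnorm. reflexivity.
  - rewrite mulx1. apply mulVx.
  - intros s t.
    assert (Ht : f t = (f x)⁻ ⋅ f (x ⋅ t) \/ f t = ((f x)⁻ ⋅ f (x ⋅ t))⁻).
    { destruct (ph_ph _ _ Hf x t) as [E|E]; rewrite E; gnorm; [left|right]; reflexivity. }
    rewrite mulA. destruct (ph_ph _ _ Hf (x ⋅ s) t) as [E|E]; rewrite E;
      destruct Ht as [Ht|Ht]; rewrite Ht; gnorm; auto.
Qed.

Definition mu (t : G) := finv f Hf (chi t).

Lemma mu_PH : PHmap G mu.
Proof. unfold mu. apply (comp_PH (finv f Hf) chi). apply finv_PH. apply chi_PH. Qed.

Lemma mu_good t : good f x t -> mu t = t.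
Proof. intro H. unfold mu, chi. unfold good in H. rewrite H. gnorm. apply finv_f. Qed.

Lemma mu_bad t : ~ good f x t -> mu t = t⁻.
Proof.
  intro H. unfold mu, chi. rewrite (ph_bad _ _ Hf _ _ H). gnorm.
  rewrite <- (ph_inv _ _ Hf). apply finv_f.
Qed.

Lemma mu_half s t : mu (s ⋅ t) = mu s ⋅ mu t \/ mu (s ⋅ t) = mu t ⋅ mu s.
Proof.
  destruct (classic (good mu s t)) as [H|H]; [left; exact H|right].
  apply (bad_flip _ _ mu_PH _ _ H).
Qed.
End LXsec.

Section LX2.
Context {G : Grp}.
Variable f : G -> G.
Hypothesis Hf : PHmap G f.

Lemma conj_noncomm (x g : G) : x ⋅ g ⋅ x⁻ = g -> x ⋅ g = g ⋅ x.
Proof. intro H. rm x H. exact H. Qed.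

Lemma bad_conj x t : ~ good f x t -> x ⋅ t ⋅ x⁻ = t⁻.
Proof. intro H. destruct (bad_dom f Hf _ _ H) as [Q1 Q2]. eapply q_conjx; eassumption. Qed.

Lemma claimD x y g : ~ good f x y -> good f x g -> x ⋅ g <> g ⋅ x ->
  y ⋅ g ⋅ y = g \/ (g ⋅ g = 𝟙 /\ x ⋅ g ⋅ x⁻ = y ⋅ g ⋅ y⁻).
Proof.
  intros Hy Hg Hnc.
  assert (My := mu_bad f Hf x y Hy). assert (Mg := mu_good f Hf x g Hg).
  destruct (classic (good f x (y ⋅ g))) as [Hyg|Hyg].
  - assert (M := mu_good f Hf x _ Hyg).
    destruct (mu_half f Hf x y g) as [E|E]; rewrite M, My, Mg in E.
    + apply mulIr in E. exfalso. apply (bad_nsq_dom f Hf _ _ Hy). apply inv_self_sq. symmetry. exact E.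
    + left. rewrite E. gnorm. reflexivity.
  - assert (M := mu_bad f Hf x _ Hyg).
    assert (C1 := bad_conj _ _ Hy). assert (C2 := bad_conj _ _ Hyg).
    assert (Hxg : x ⋅ g ⋅ x⁻ = y ⋅ g⁻ ⋅ y⁻).
    { transitivity (y ⋅ ((x ⋅ y ⋅ x⁻) ⋅ (x ⋅ g ⋅ x⁻))).
      - rewrite C1. gnorm. reflexivity.
      - transitivity (y ⋅ (x ⋅ (y ⋅ g) ⋅ x⁻)). gnorm; reflexivity.
        rewrite C2. gnorm. reflexivity. }
    destruct (mu_half f Hf x y g) as [E|E]; rewrite M, My, Mg in E; rewrite invM in E.
    + exfalso. apply Hnc. apply conj_noncomm. rewrite Hxg. lm y E. gnorm. exact E.
    + apply mulIr in E. right. split.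
      * apply inv_self_sq. exact E.
      * rewrite Hxg, E. reflexivity.
Qed.
End LX2.

Section LX3.
Context {G : Grp}.
Variable f : G -> G.
Hypothesis Hf : PHmap G f.

Lemma LX1 x y g : ~ good f x y -> good f x g -> x ⋅ g <> g ⋅ x -> g ⋅ g <> 𝟙 -> False.
Proof.
  intros Hy Hg Hnc Hgg.
  assert (Hy2 := bad_mul f Hf _ _ Hy).
  destruct (claimD f Hf x y g Hy Hg Hnc) as [D1|[D1 _]]; [|contradiction].
  destruct (claimD f Hf x (x ⋅ y) g Hy2 Hg Hnc) as [D2|[D2 _]]; [|contradiction].
  destruct (bad_dom f Hf _ _ Hy) as [Q1 Q2].
  assert (qc : y⁻ ⋅ x ⋅ y = x⁻) by (eapply q_conjy; eassumption).
  assert (E : x ⋅ y ⋅ g ⋅ (x ⋅ y) = y ⋅ g ⋅ y) by (rewrite D2, D1; reflexivity).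
  assert (E2 : (y⁻ ⋅ x ⋅ y) ⋅ g ⋅ x ⋅ y = g ⋅ y).
  { transitivity (y⁻ ⋅ (x ⋅ y ⋅ g ⋅ (x ⋅ y))). gnorm; reflexivity. rewrite E. gnorm. reflexivity. }
  rewrite qc in E2. rm (y⁻) E2. lm x E2. apply Hnc. symmetry. exact E2.
Qed.

Lemma LX x y g : ~ good f x y -> good f x g -> x ⋅ g <> g ⋅ x -> False.
Proof.
  intros Hy Hg Hnc.
  destruct (classic (g ⋅ g = 𝟙)) as [Hgg|Hgg]; [|exact (LX1 x y g Hy Hg Hnc Hgg)].
  assert (Hxg2 : (x ⋅ g) ⋅ (x ⋅ g) = 𝟙).
  { apply NNPP. intro N. apply (LX1 x y (x ⋅ g) Hy (good_mul' f Hf _ _ Hg)); auto.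
    intro C. apply Hnc. gnormin C. lm (x⁻) C. exact C. }
  assert (gxg : g ⋅ x ⋅ g = x⁻).
  { lm (x⁻) Hxg2. gnorm. exact Hxg2. }
  assert (Hy2 := bad_mul f Hf _ _ Hy).
  destruct (bad_dom f Hf _ _ Hy) as [Q1 Q2].
  assert (ee : x ⋅ x ⋅ (x ⋅ x) = 𝟙) by (eapply q_e4; eassumption).
  assert (Hyy := bad_nsq_dom f Hf _ _ Hy).
  assert (He1 : x ⋅ x <> 𝟙) by (rewrite Q2; exact Hyy).
  assert (Hxx' : x⁻ ⋅ x⁻ = x ⋅ x).
  { rewrite <- invM. symmetry. apply eq1_inv. exact ee. }
  assert (Hginv : g⁻ = g) by (apply inv_eq_self; exact Hgg).
  assert (Hxgx : x ⋅ g ⋅ x⁻ = g ⋅ (x ⋅ x)).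
  { rewrite <- Hxx'. lm g gxg. rewrite mulA, Hgg, mul1 in gxg. rewrite gxg. gnorm. reflexivity. }
  assert (Hge : g ⋅ (x ⋅ x) = x ⋅ x ⋅ g).
  { assert (E : g ⋅ (x ⋅ x) ⋅ g = x ⋅ x).
    { transitivity ((g ⋅ x ⋅ g) ⋅ (g ⋅ x ⋅ g)).
      - gnorm. rewrite (mulA g g), Hgg, mul1. reflexivity.
      - rewrite gxg. exact Hxx'. }
    rm g E. rewrite Hgg, mulx1 in E. rewrite E. gnorm. reflexivity. }
  assert (Hxex : x ⋅ x ⋅ x = x ⋅ (x ⋅ x)) by (gnorm; reflexivity).
  destruct (claimD f Hf x y g Hy Hg Hnc) as [D1|[_ D1]].
  -
    assert (gyg : g ⋅ y ⋅ g = y⁻).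
    { assert (E : y ⋅ g = g ⋅ y⁻) by (rm (y⁻) D1; exact D1).
      transitivity (g ⋅ (y ⋅ g)). gnorm; reflexivity. rewrite E, mulA, Hgg, mul1. reflexivity. }
    assert (Hxy' : x⁻ ⋅ y⁻ = x ⋅ y).
    { assert (ee' : y ⋅ y ⋅ (y ⋅ y) = 𝟙) by (rewrite <- Q2; exact ee).
      apply (mulI x). rewrite mulKV, mulA, Q2. symmetry. apply eq1_inv. gnormin ee'. gnorm. exact ee'. }
    assert (Cxy : g ⋅ (x ⋅ y) = x ⋅ y ⋅ g).
    { assert (E : g ⋅ (x ⋅ y) ⋅ g = x ⋅ y).
      { transitivity ((g ⋅ x ⋅ g) ⋅ (g ⋅ y ⋅ g)).
        - gnorm. rewrite (mulA g g), Hgg, mul1. reflexivity.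
        - rewrite gxg, gyg. exact Hxy'. }
      rm g E. rewrite Hgg, mulx1 in E. rewrite E. gnorm. reflexivity. }
    destruct (claimD f Hf x (x ⋅ y) g Hy2 Hg Hnc) as [D3|[_ D3]].
    + apply Hyy. assert (E : x ⋅ y ⋅ (x ⋅ y) = 𝟙).
      { apply (mulIr g). rewrite mul1.
        transitivity (x ⋅ y ⋅ ((x ⋅ y) ⋅ g)). gnorm; reflexivity.
        rewrite <- Cxy. rewrite <- D3 at 2. gnorm. reflexivity. }
      rewrite <- E. rewrite <- Q1 at 1. gnorm. reflexivity.
    + apply Hnc. apply conj_noncomm. rewrite D3. rewrite <- Cxy. gnorm. reflexivity.
  -
    destruct (claimD f Hf x (x ⋅ y) g Hy2 Hg Hnc) as [D3|[_ D3]].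
    + assert (yg : y ⋅ g = g ⋅ (x ⋅ x) ⋅ y).
      { rewrite <- Hxgx, D1. gnorm. reflexivity. }
      assert (yxy : y ⋅ x ⋅ y = x) by (eapply q_yxy; eassumption).
      apply He1. apply (mulI g). rewrite mulx1.
      transitivity (x ⋅ y ⋅ g ⋅ (x ⋅ y)); [| exact D3]. symmetry.
      transitivity (x ⋅ (y ⋅ g) ⋅ x ⋅ y). gnorm; reflexivity. rewrite yg.
      transitivity (x ⋅ g ⋅ (x ⋅ x) ⋅ (y ⋅ x ⋅ y)). gnorm; reflexivity. rewrite yxy.
      transitivity ((x ⋅ g ⋅ x⁻) ⋅ (x ⋅ x) ⋅ (x ⋅ x)). gnorm; reflexivity.
      rewrite Hxgx. transitivity (g ⋅ (x ⋅ x ⋅ (x ⋅ x)) ⋅ (x ⋅ x)). gnorm; reflexivity.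
      rewrite ee, mulx1. reflexivity.
    + apply Hnc. apply conj_noncomm. rewrite D3.
      transitivity (x ⋅ (y ⋅ g ⋅ y⁻) ⋅ x⁻). gnorm; reflexivity.
      rewrite <- D1, Hxgx. gnorm.
      transitivity ((x ⋅ g ⋅ x⁻) ⋅ (x ⋅ x)). gnorm; reflexivity. rewrite Hxgx.
      transitivity (g ⋅ (x ⋅ x ⋅ (x ⋅ x))). gnorm; reflexivity. rewrite ee, mulx1. reflexivity.
Qed.
End LX3.

Section GAsec.
Context {G : Grp}.
Variable f : G -> G.
Hypothesis Hf : PHmap G f.

Lemma GA x y u v : ~ good f x y -> good f u v -> u ⋅ v <> v ⋅ u -> False.
Proof.
  intros Hxy Huv Hnc.
  assert (Hyx := bad_sym f Hf _ _ Hxy).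
  assert (Hvu := good_sym f Hf _ _ Hnc Huv).
  assert (Hnc' : v ⋅ u <> u ⋅ v) by (intro E; apply Hnc; symmetry; exact E).
  assert (Cxu : x ⋅ u = u ⋅ x).
  { apply NNPP. intro N. destruct (classic (good f x u)) as [H|H].
    - exact (LX f Hf x y u Hxy H N).
    - exact (LX f Hf u x v (bad_sym f Hf _ _ H) Huv Hnc). }
  assert (Cyu : y ⋅ u = u ⋅ y).
  { apply NNPP. intro N. destruct (classic (good f y u)) as [H|H].
    - exact (LX f Hf y x u Hyx H N).
    - exact (LX f Hf u y v (bad_sym f Hf _ _ H) Huv Hnc). }
  assert (Cyv : y ⋅ v = v ⋅ y).
  { apply NNPP. intro N. destruct (classic (good f y v)) as [H|H].
    - exact (LX f Hf y x v Hyx H N).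
    - exact (LX f Hf v y u (bad_sym f Hf _ _ H) Hvu Hnc'). }
  set (w := y ⋅ u).
  assert (Nxw : x ⋅ w <> w ⋅ x).
  { intro E. apply (bad_nc f Hf _ _ Hxy). unfold w in E.
    assert (E2 : x ⋅ y ⋅ u = y ⋅ x ⋅ u).
    { rewrite <- mulA, E. rewrite <- (mulA y u x), <- Cxu. gnorm. reflexivity. }
    apply mulIr in E2. exact E2. }
  assert (Bxw : ~ good f x w) by (intro H; exact (LX f Hf x y w Hxy H Nxw)).
  assert (Bwx := bad_sym f Hf _ _ Bxw).
  assert (Nwv : w ⋅ v <> v ⋅ w).
  { intro E. apply Hnc. unfold w in E. apply (mulI y).
    rewrite mulA, E. rewrite (mulA v y u), <- Cyv. gnorm. reflexivity. }
  assert (Bwv : ~ good f w v) by (intro H; exact (LX f Hf w x v Bwx H Nwv)).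
  assert (F1 := bad_flip G f Hf _ _ Bwv).
  assert (Gyu : good f y u) by (apply good_comm; auto).
  assert (Gyuv : good f y (u ⋅ v)).
  { apply good_comm; auto. rewrite mulA, Cyu, <- mulA, Cyv, mulA. reflexivity. }
  assert (Gyv : good f y v) by (apply good_comm; auto).
  assert (Gvy : good f v y) by (apply good_comm; auto).
  unfold good in *. unfold w in F1. rewrite Gyu in F1. rewrite <- mulA, Gyuv, Huv in F1.
  assert (Cfyv : f y ⋅ f v = f v ⋅ f y) by (rewrite <- Gyv, <- Gvy, Cyv; reflexivity).
  assert (E : f v ⋅ f u = f u ⋅ f v).
  { apply (mulI (f y)). rewrite mulA, Cfyv, <- mulA. rewrite <- F1. gnorm. reflexivity. }
  apply Hnc. apply (ph_inj _ _ Hf). rewrite Huv, Hvu. symmetry. exact E.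
Qed.

Theorem dichotomy :
  (forall x y, good f x y) \/
  ((forall u v : G, v ⋅ u = u ⋅ v \/ v ⋅ u = u ⋅ v⁻) /\ exists x y : G, x ⋅ y <> y ⋅ x).
Proof.
  destruct (classic (forall x y, good f x y)) as [H|H]; [left; exact H|right].
  apply not_all_ex_not in H. destruct H as [x H]. apply not_all_ex_not in H. destruct H as [y H].
  split.
  - intros u v. destruct (classic (u ⋅ v = v ⋅ u)) as [C|C]; [left; symmetry; exact C|right].
    destruct (classic (good f u v)) as [Hg|Hb].
    + exfalso. exact (GA x y u v H Hg C).
    + destruct (bad_dom f Hf _ _ Hb) as [Q1 Q2].
      assert (E : v ⋅ u ⋅ v = u) by (eapply q_yxy; eassumption).
      rm (v⁻) E. gnorm. exact E.
  - exists x, y. apply (bad_nc f Hf _ _ H).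
Qed.
End GAsec.

Lemma sig_eq {A : Type} {P : A -> Prop} (a b : {x | P x}) : proj1_sig a = proj1_sig b -> a = b.
Proof.
  destruct a as [a Ha], b as [b Hb]. simpl. intros ->. f_equal. apply proof_irrelevance.
Qed.

Section SubGrp.
Context {G : Grp}.
Variable M : G -> Prop.
Hypothesis M1 : M 𝟙.
Hypothesis Mmul : forall a b, M a -> M b -> M (a ⋅ b).
Hypothesis Minv : forall a, M a -> M (a⁻).

Definition sg_mul (a b : {c | M c}) : {c | M c} :=
  exist _ (proj1_sig a ⋅ proj1_sig b) (Mmul _ _ (proj2_sig a) (proj2_sig b)).
Definition sg_inv (a : {c | M c}) : {c | M c} := exist _ ((proj1_sig a)⁻) (Minv _ (proj2_sig a)).
Definition sg_one : {c | M c} := exist _ 𝟙 M1.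

Lemma sg_mulA a b c : sg_mul a (sg_mul b c) = sg_mul (sg_mul a b) c.
Proof. apply sig_eq. simpl. apply mulA. Qed.
Lemma sg_mul1 a : sg_mul sg_one a = a.
Proof. apply sig_eq. simpl. apply mul1. Qed.
Lemma sg_mulV a : sg_mul (sg_inv a) a = sg_one.
Proof. apply sig_eq. simpl. apply mulVx. Qed.

Definition subGrp : Grp := {|
  carrier := {c | M c};
  gmul := sg_mul; ginv := sg_inv; gone := sg_one;
  gmulA := sg_mulA; gmul1 := sg_mul1; gmulV := sg_mulV |}.
End SubGrp.

Section Ham.
Context {G : Grp}.
Hypothesis HP : forall u v : G, v ⋅ u = u ⋅ v \/ v ⋅ u = u ⋅ v⁻.
Variables x y : G.
Hypothesis Hxy : x ⋅ y <> y ⋅ x.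

Lemma R1 : y ⋅ x = x ⋅ y⁻.
Proof. destruct (HP x y) as [E|E]; [exfalso; apply Hxy; symmetry; exact E| exact E]. Qed.
Lemma R2 : x ⋅ y = y ⋅ x⁻.
Proof. destruct (HP y x) as [E|E]; [exfalso; apply Hxy; exact E| exact E]. Qed.
Lemma HQ1 : x ⋅ y ⋅ x = y.
Proof. rewrite R2. gnorm. reflexivity. Qed.
Lemma Hyxy : y ⋅ x ⋅ y = x.
Proof. rewrite R1. gnorm. reflexivity. Qed.
Lemma HQ2 : x ⋅ x = y ⋅ y.
Proof.
  rewrite <- Hyxy at 2. rewrite <- HQ1 at 3. gnorm. reflexivity.
Qed.

Definition e := x ⋅ x.
Lemma e2 : e ⋅ e = 𝟙.
Proof. unfold e. apply (q_e4 x y HQ1 HQ2). Qed.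
Lemma e_inv : e⁻ = e.
Proof. apply inv_eq_self. apply e2. Qed.
Lemma e_ne1 : e <> 𝟙.
Proof.
  unfold e. intro E. apply Hxy. rewrite R2. rewrite (inv_eq_self _ E). reflexivity.
Qed.
Lemma ey : e = y ⋅ y.
Proof. apply HQ2. Qed.
Lemma xinv : x⁻ = x ⋅ e.
Proof. symmetry. apply eq1_inv'. rewrite mulA. change (x ⋅ x) with e. rewrite e2. reflexivity. Qed.
Lemma e_central g : g ⋅ e = e ⋅ g.
Proof.
  unfold e. destruct (HP g x) as [E|E].
  - rewrite mulA, <- E, <- mulA, <- E, mulA. reflexivity.
  - symmetry. rewrite <- mulA, E, mulA, E, <- mulA, <- invM. change (x ⋅ x) with e.
    rewrite e_inv. reflexivity.
Qed.

Definition C (c : G) := c ⋅ x = x ⋅ c /\ c ⋅ y = y ⋅ c.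

Lemma C_sq c : C c -> c ⋅ c = 𝟙.
Proof.
  intros [Cx Cy]. destruct (HP y (x ⋅ c)) as [E|E].
  - exfalso. apply Hxy. rewrite <- mulA, Cy, !mulA in E. apply mulIr in E. exact E.
  - rewrite invM in E.
    assert (Cx' : c⁻ ⋅ x⁻ = x⁻ ⋅ c⁻) by (rewrite <- !invM, Cx; reflexivity).
    rewrite <- mulA, Cy in E. rewrite Cx', (mulA y), <- R2, (mulA x y c) in E.
    apply mulI in E. apply inv_self_sq. symmetry. exact E.
Qed.

Lemma C_mul c d : C c -> C d -> C (c ⋅ d).
Proof.
  intros [c1 c2] [d1 d2]. split.
  - rewrite <- mulA, d1, mulA, c1, <- mulA. reflexivity.
  - rewrite <- mulA, d2, mulA, c2, <- mulA. reflexivity.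
Qed.
Lemma C_one : C 𝟙.
Proof. split; rewrite mul1, mulx1; reflexivity. Qed.
Lemma C_e : C e.
Proof. split; symmetry; apply e_central. Qed.
Lemma C_inv c : C c -> c⁻ = c.
Proof. intro H. apply inv_eq_self. apply C_sq. exact H. Qed.
Lemma C_comm c d : C c -> C d -> c ⋅ d = d ⋅ c.
Proof.
  intros Hc Hd. assert (H := C_sq _ (C_mul _ _ Hc Hd)).
  apply eq1_inv in H. rewrite H, invM, (C_inv _ Hc), (C_inv _ Hd). reflexivity.
Qed.

Definition E (b : bool) : G := if b then e else 𝟙.
Definition base (u : QU) : G := match u with Q1 => 𝟙 | Qi => x | Qj => y | Qk => x ⋅ y end.
Definition iota (p : Q8) : G := E (fst p) ⋅ base (snd p).

Lemma E_xor a b : E (xorb a b) = E a ⋅ E b.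
Proof. destruct a, b; simpl; rewrite ?mul1, ?mulx1; try reflexivity. symmetry. apply e2. Qed.
Lemma E_central b g : E b ⋅ g = g ⋅ E b.
Proof. destruct b; simpl. symmetry; apply e_central. rewrite mul1, mulx1. reflexivity. Qed.

Lemma base_mul u v : base u ⋅ base v = E (fst (qumul u v)) ⋅ base (snd (qumul u v)).
Proof.
  assert (yinv : y⁻ = y ⋅ e).
  { symmetry. apply eq1_inv'. rewrite mulA, <- ey, e2. reflexivity. }
  destruct u, v; simpl; rewrite ?mul1, ?mulx1; try reflexivity.
  - rewrite mulA. reflexivity.
  - rewrite R1, yinv, mulA. apply e_central.
  - symmetry. apply ey.
  - rewrite mulA. apply Hyxy.
  - apply HQ1.
  - rewrite <- mulA, <- ey. apply e_central.
  - rewrite mulA, HQ1. symmetry. apply ey.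
Qed.


Lemma iota_mul p q : iota (q8mul p q) = iota p ⋅ iota q.
Proof.
  destruct p as [s u], q as [t v]. unfold q8mul, iota. simpl.
  assert (Hb := base_mul u v). destruct (qumul u v) as [s' w]. simpl in *.
  rewrite !E_xor.
  transitivity (E s ⋅ (E t ⋅ (base u ⋅ base v))).
  - rewrite Hb. gnorm. reflexivity.
  - rewrite (mulA (E t) (base u)), (E_central t (base u)). gnorm. reflexivity.
Qed.

Definition q8one : Q8 := (false, Q1).
Definition q8inv (p : Q8) : Q8 := match snd p with Q1 => p | _ => (negb (fst p), snd p) end.
Lemma q8_invl p : q8mul (q8inv p) p = q8one.
Proof. destruct p as [[|] [| | |]]; reflexivity. Qed.
Lemma q8_cancel p r : q8mul p (q8mul (q8inv p) r) = r.
Proof. destruct p as [[|] [| | |]], r as [[|] [| | |]]; reflexivity. Qed.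
Lemma q8_mul1 p : q8mul p q8one = p.
Proof. destruct p as [[|] [| | |]]; reflexivity. Qed.

Lemma iota_one : iota q8one = 𝟙.
Proof. unfold iota. simpl. apply mul1. Qed.
Lemma iota_inv p : iota (q8inv p) = (iota p)⁻.
Proof. apply eq1_inv. rewrite <- iota_mul, q8_invl. apply iota_one. Qed.

Lemma E_C s : C (E s).
Proof. destruct s; [apply C_e | apply C_one]. Qed.
Lemma E_sq s : E s ⋅ E s = 𝟙.
Proof. destruct s; simpl; [apply e2 | apply mul1]. Qed.

Lemma iota_C p : C (iota p) -> snd p = Q1.
Proof.
  destruct p as [s u]. unfold iota. simpl. intro H.
  assert (Hb : C (base u)).
  { assert (E1 : base u = E s ⋅ (E s ⋅ base u)) by (rewrite mulA, E_sq, mul1; reflexivity).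
    rewrite E1. apply C_mul; [apply E_C | exact H]. }
  destruct u; simpl in Hb; auto; exfalso; destruct Hb as [B1 B2].
  - apply Hxy. exact B2.
  - apply Hxy. symmetry. exact B1.
  - apply Hxy. rewrite <- mulA in B1. apply mulI in B1. symmetry. exact B1.
Qed.

Lemma Ccond c : c⁻ ⋅ x ⋅ c = x -> c⁻ ⋅ y ⋅ c = y -> C c.
Proof.
  intros H1 H2. split.
  - lm c H1. rewrite H1. reflexivity.
  - lm c H2. rewrite H2. reflexivity.
Qed.

Lemma conjq (q g a : G) : (q⁻ ⋅ g)⁻ ⋅ a ⋅ (q⁻ ⋅ g) = g⁻ ⋅ (q ⋅ a ⋅ q⁻) ⋅ g.
Proof. gnorm. reflexivity. Qed.

Lemma decomp g : exists u, C ((base u)⁻ ⋅ g).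
Proof.
  assert (cxy : x ⋅ y ⋅ x⁻ = y⁻) by (apply (q_conjx x y HQ1 HQ2)).
  assert (cyx : y ⋅ x ⋅ y⁻ = x⁻) by (apply (q_conjx y x Hyxy (eq_sym HQ2))).
  assert (gx : g⁻ ⋅ x ⋅ g = x \/ g⁻ ⋅ x ⋅ g = x⁻).
  { destruct (HP g x) as [E|E]; [left|right]; lm (g⁻) E; gnorm; exact E. }
  assert (gy : g⁻ ⋅ y ⋅ g = y \/ g⁻ ⋅ y ⋅ g = y⁻).
  { destruct (HP g y) as [E|E]; [left|right]; lm (g⁻) E; gnorm; exact E. }
  assert (I1 : forall a, g⁻ ⋅ a ⋅ g = a⁻ -> g⁻ ⋅ a⁻ ⋅ g = a).
  { intros a H. rewrite conjV, H, invK. reflexivity. }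
  destruct gx as [gx|gx], gy as [gy|gy].
  - exists Q1. simpl. apply Ccond; rewrite conjq, inv1, mul1, mulx1; assumption.
  - exists Qi. simpl. apply Ccond; rewrite conjq.
    + rewrite invKr. exact gx.
    + rewrite cxy. apply I1. exact gy.
  - exists Qj. simpl. apply Ccond; rewrite conjq.
    + rewrite cyx. apply I1. exact gx.
    + rewrite invKr. exact gy.
  - exists Qk. simpl. apply Ccond; rewrite conjq.
    + transitivity (g⁻ ⋅ (x ⋅ (y ⋅ x ⋅ y⁻) ⋅ x⁻) ⋅ g). gnorm; reflexivity.
      rewrite cyx, mulxV, mul1. apply I1. exact gx.
    + transitivity (g⁻ ⋅ (x ⋅ y ⋅ x⁻) ⋅ g). gnorm; reflexivity.
      rewrite cxy. apply I1. exact gy.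
Qed.

Definition PM (M : G -> Prop) : Prop :=
  (forall m, M m -> C m) /\ (forall a b, M a -> M b -> M (a ⋅ b)) /\ ~ M e.

Lemma maxM : exists M : G -> Prop, PM M /\ M 𝟙 /\ (forall c, C c -> M c \/ M (e ⋅ c)).
Proof.
  destruct (zorn_sub G PM) as [A [PA HA]].
  - intros F HF Htot. split; [|split]; cbv beta.
    + intros m [X [FX Xm]]. exact (proj1 (HF X FX) m Xm).
    + intros a b [X [FX Xa]] [Y [FY Yb]].
      destruct (Htot X Y FX FY) as [S|S].
      * exists Y. split; [exact FY|]. apply (proj1 (proj2 (HF Y FY))); auto.
      * exists X. split; [exact FX|]. apply (proj1 (proj2 (HF X FX))); auto.
    + intros [X [FX Xe]]. exact (proj2 (proj2 (HF X FX)) Xe).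
  - destruct PA as [PA1 [PA2 PA3]].
    assert (A1 : A 𝟙).
    { apply NNPP. intro N. apply (HA (fun t => A t \/ t = 𝟙)).
      - intros t Ht. left; exact Ht.
      - intro S. apply N. exact (S 𝟙 (or_intror eq_refl)).
      - split; [|split]; cbv beta.
        + intros m [Hm|Hm]; [apply PA1; exact Hm| subst; apply C_one].
        + intros a b [Ha|Ha] [Hb|Hb]; subst; rewrite ?mul1, ?mulx1; auto.
        + intros [He|He]; [apply PA3; exact He| apply e_ne1; exact He]. }
    exists A. split; [split; [exact PA1|split; assumption]|split; [exact A1|]].
    intros c Cc. apply NNPP. intro N. apply not_or_and in N. destruct N as [N1 N2].
    apply (HA (fun t => A t \/ exists m, A m /\ t = c ⋅ m)).
    + intros t Ht. left; exact Ht.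
    + intro S. apply N1. apply S. right. exists 𝟙. split; [exact A1 | rewrite mulx1; reflexivity].
    + split; [|split]; cbv beta.
      * intros m [Hm|[m' [Hm' ->]]]; [apply PA1; exact Hm| apply C_mul; auto].
      * intros a b [Ha|[m [Hm ->]]] [Hb|[m' [Hm' ->]]].
        -- left. apply PA2; assumption.
        -- right. exists (a ⋅ m'). split; [apply PA2; assumption|].
           rewrite mulA, (C_comm a c (PA1 _ Ha) Cc), <- mulA. reflexivity.
        -- right. exists (m ⋅ b). split; [apply PA2; assumption|]. rewrite <- mulA. reflexivity.
        -- left. replace (c ⋅ m ⋅ (c ⋅ m')) with (m ⋅ m'). apply PA2; assumption.
           rewrite (C_comm c m Cc (PA1 _ Hm)). gnorm. rewrite (mulA c c), (C_sq c Cc), mul1. reflexivity.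
      * intros [He|[m [Hm Hem]]]; [apply PA3; exact He|].
        apply N2. replace (e ⋅ c) with m; [exact Hm|].
        rewrite Hem, (C_comm c m Cc (PA1 _ Hm)). gnorm. rewrite (C_sq c Cc), mulx1. reflexivity.
Qed.

Lemma C_base_comm m u : C m -> m ⋅ base u = base u ⋅ m.
Proof.
  intros [Cx Cy]. destruct u; simpl.
  - rewrite mul1, mulx1. reflexivity.
  - exact Cx.
  - exact Cy.
  - rewrite mulA, Cx, <- mulA, Cy, mulA. reflexivity.
Qed.
Lemma C_iota_comm m p : C m -> m ⋅ iota p = iota p ⋅ m.
Proof.
  intro H. unfold iota. rewrite mulA, <- E_central, <- mulA, C_base_comm by exact H.
  rewrite mulA. reflexivity.
Qed.

Theorem ham : hamiltonian2 G.
Proof.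
  destruct maxM as [M [[MC [Mmul Me]] [M1 Mdec]]].
  assert (Minv : forall a, M a -> M (a⁻)).
  { intros a Ha. rewrite (C_inv a (MC a Ha)). exact Ha. }
  set (B := subGrp M M1 Mmul Minv).
  assert (Ex : forall g, exists pb : Q8 * B, g = iota (fst pb) ⋅ proj1_sig (snd pb)).
  { intro g. destruct (decomp g) as [u Cc]. set (c := (base u)⁻ ⋅ g) in *.
    destruct (Mdec c Cc) as [Hc|Hc].
    - exists ((false, u), (exist _ c Hc : B)). simpl. unfold iota. simpl. unfold c. gnorm. reflexivity.
    - exists ((true, u), (exist _ (e ⋅ c) Hc : B)). simpl. unfold iota. simpl.
      transitivity (base u ⋅ (e ⋅ e) ⋅ c).
      + rewrite e2, mulx1. unfold c. gnorm. reflexivity.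
      + rewrite <- (e_central (base u)). gnorm. reflexivity. }
  assert (Un : forall p p' m m', M m -> M m' -> iota p ⋅ m = iota p' ⋅ m' -> p = p' /\ m = m').
  { intros p p' m m' Hm Hm' Eq.
    set (r := q8mul (q8inv p') p).
    assert (Hr : iota r = m' ⋅ m).
    { assert (Eq' : iota p = iota p' ⋅ m' ⋅ m⁻) by (rewrite <- Eq; gnorm; reflexivity).
      unfold r. rewrite iota_mul, iota_inv, Eq'. gnorm. rewrite (C_inv m (MC m Hm)). reflexivity. }
    assert (Mr : M (iota r)) by (rewrite Hr; apply Mmul; assumption).
    assert (Sr := iota_C r (MC _ Mr)).
    assert (Rr : r = q8one).
    { destruct r as [s u] eqn:Er. simpl in Sr. subst u. destruct s.
      - exfalso. apply Me. unfold iota in Mr. simpl in Mr. rewrite mulx1 in Mr. exact Mr.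
      - reflexivity. }
    assert (Pp : p = p').
    { rewrite <- (q8_cancel p' p). fold r. rewrite Rr. apply q8_mul1. }
    split; [exact Pp|]. subst p'. apply mulI in Eq. exact Eq. }
  set (f := fun g => proj1_sig (constructive_indefinite_description _ (Ex g))).
  assert (Sp : forall g, g = iota (fst (f g)) ⋅ proj1_sig (snd (f g))).
  { intro g. unfold f. destruct (constructive_indefinite_description _ (Ex g)) as [pb H]. exact H. }
  assert (Uf : forall g (pb : Q8 * B), g = iota (fst pb) ⋅ proj1_sig (snd pb) -> f g = pb).
  { intros g [p b] H. simpl in H. assert (H2 := Sp g).
    destruct (f g) as [p' b'] eqn:Efg. simpl in H2.
    destruct (Un p' p (proj1_sig b') (proj1_sig b) (proj2_sig b') (proj2_sig b)) as [E1 E2].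
    - rewrite <- H2. exact H.
    - subst p'. f_equal. apply sig_eq. exact E2. }
  exists B. split; [|split].
  - intros a b. apply sig_eq. simpl. apply C_comm; apply MC; apply proj2_sig.
  - intros b. apply sig_eq. simpl. apply C_sq. apply MC. apply proj2_sig.
  - exists f. split.
    + exists (fun pb : Q8 * B => iota (fst pb) ⋅ proj1_sig (snd pb)). split.
      * intro g. symmetry. apply Sp.
      * intros pb. apply Uf. reflexivity.
    + intros a b. apply Uf. simpl.
      rewrite (Sp a) at 1. rewrite (Sp b) at 1.
      rewrite iota_mul.
      assert (Cm : C (proj1_sig (snd (f a)))) by (apply MC; apply proj2_sig).
      transitivity (iota (fst (f a)) ⋅ (proj1_sig (snd (f a)) ⋅ iota (fst (f b))) ⋅ proj1_sig (snd (f b))).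
      gnorm; reflexivity.
      rewrite (C_iota_comm _ _ Cm). gnorm. reflexivity.
Qed.
End Ham.

Theorem corollary4p8 (G : Grp) :
  ~ hamiltonian2 G -> strongly_CCA (fun s : G => s <> gone).
Proof.
  intros Hnh phi [[Hbij Hadj] Hcol].
  destruct Hbij as [gi [Hl Hr]].
  set (c0 := phi 𝟙).
  set (psi := fun t => c0⁻ ⋅ phi t).
  assert (Hpsi : PHmap G psi).
  { constructor.
    - intros s t E. unfold psi in E. apply mulI in E. rewrite <- (Hl s), <- (Hl t), E. reflexivity.
    - intro w. exists (gi (c0 ⋅ w)). unfold psi. rewrite Hr. gnorm. reflexivity.
    - unfold psi. apply mulVx.
    - intros a s. destruct (classic (s = 𝟙)) as [Hs|Hs].
      + left. subst s. unfold psi. rewrite mulx1. fold c0. rewrite mulVx, mulx1. reflexivity.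
      + assert (A1 : cay_adj (fun s : G => s <> gone) a (a ⋅ s)).
        { unfold cay_adj. rewrite mulVK. exact Hs. }
        assert (A2 : cay_adj (fun s : G => s <> gone) 𝟙 s).
        { unfold cay_adj. rewrite inv1, mul1. exact Hs. }
        assert (SC : same_colour a (a ⋅ s) 𝟙 s).
        { unfold same_colour, edge_colour. intro t.
          rewrite mulVK, inv1, mul1, mulx1. rewrite invM, <- mulA, mulVx, mulx1. tauto. }
        assert (Hc := Hcol _ _ _ _ A1 A2 SC).
        destruct (proj1 (Hc ((phi a)⁻ ⋅ phi (a ⋅ s))) (or_introl eq_refl)) as [E|E].
        * left. unfold psi. fold c0 in E |- *. transitivity ((c0⁻ ⋅ phi a) ⋅ ((phi a)⁻ ⋅ phi (a ⋅ s))).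
          gnorm; reflexivity. rewrite E. reflexivity.
        * right. unfold psi. fold c0 in E |- *. transitivity ((c0⁻ ⋅ phi a) ⋅ ((phi a)⁻ ⋅ phi (a ⋅ s))).
          gnorm; reflexivity. rewrite E. gnorm. reflexivity. }
  destruct (dichotomy psi Hpsi) as [Hhom | [HP [x [y Hxy]]]].
  - exists psi, (finv psi Hpsi c0). split.
    + split.
      * exists (finv psi Hpsi). split; [apply finv_f | apply f_finv].
      * exact Hhom.
    + intro t. rewrite (Hhom (finv psi Hpsi c0) t), f_finv. unfold psi. gnorm. reflexivity.
  - exfalso. apply Hnh. exact (ham HP x y Hxy).
Qed.
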